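(* Let $u$ be a recurrent aperiodic infinite word over a finite ordered alphabet, and let $w$ and $v$ be factors of $u$. Then it is impossible that simultaneously there exist $k,l\ge 0$ such that $T^k(u)$ is the lexicographically maximal element among the infinite words in the shift orbit closure of $u$ that start with $w$, and $T^l(u)$ is the lexicographically minimal element among the infinite words in the shift orbit closure of $u$ that start with $v$.
   Context: For an infinite word $u=u[0]u[1]\cdots$, $T^n u=u[n]u[n+1]\cdots$ is its $n$-th shift; the shift orbit closure of $u$ is the closure (in the product topology) of $\{T^n u: n\ge 0\}$. Words are compared lexicographically ($0<1<\dots<q-1$; $x<y$ if they agree up to some position and at the first differing position $x$ has the smaller letter). A word is recurrent if every factor occurs infinitely often; aperiodic means not ultimately periodic. *)

(* Defs.v *)
From mathcomp Require Import all_boot.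
Set Implicit Arguments. Unset Strict Implicit. Unset Printing Implicit Defensive.

Definition word (q : nat) := nat -> 'I_q.

Definition shift q (n : nat) (u : word q) : word q := fun i => u (n + i).

(* x belongs to the shift orbit closure of u (product topology):
   every prefix of x is a prefix of some shift of u. *)
Definition in_orbit_closure q (u x : word q) : Prop :=
  forall N, exists n, forall i, i < N -> x i = u (n + i).

Definition lex_lt q (x y : word q) : Prop :=
  exists m, (forall i, i < m -> x i = y i) /\ (x m < y m)%N.

Definition word_eq q (x y : word q) : Prop := forall i, x i = y i.

Definition starts_with q (x : word q) (w : seq 'I_q) : Prop :=
  [seq x i | i <- iota 0 (size w)] = w.

Definition factor_of q (w : seq 'I_q) (u : word q) : Prop :=
  exists n, starts_with (shift n u) w.

Definition recurrent q (u : word q) : Prop :=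
  forall w, factor_of w u ->
    forall M, exists n, M <= n /\ starts_with (shift n u) w.

Definition ultimately_periodic q (u : word q) : Prop :=
  exists p N, 0 < p /\ forall i, N <= i -> u (i + p) = u i.

Definition aperiodic q (u : word q) : Prop := ~ ultimately_periodic u.

Definition is_max_starting q (u : word q) (w : seq 'I_q) (y : word q) : Prop :=
  in_orbit_closure u y /\ starts_with y w /\
  forall x, in_orbit_closure u x -> starts_with x w -> word_eq x y \/ lex_lt x y.

Definition is_min_starting q (u : word q) (w : seq 'I_q) (y : word q) : Prop :=
  in_orbit_closure u y /\ starts_with y w /\
  forall x, in_orbit_closure u x -> starts_with x w -> word_eq x y \/ lex_lt y x.

(* Main.v *)
Require Import Defs.
From mathcomp Require Import all_boot.
From mathcomp Require Import zify.

Lemma sw_agree q (x y : word q) w :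
  (forall i, i < size w -> x i = y i) -> starts_with x w -> starts_with y w.
Proof.
move=> H; rewrite /starts_with => <-; rewrite size_map size_iota.
apply/eq_in_map => i; rewrite mem_iota add0n => /H ->; done.
Qed.

Lemma sw_prefix q (x y : word q) N :
  starts_with x [seq y i | i <- iota 0 N] -> forall i, i < N -> x i = y i.
Proof.
rewrite /starts_with size_map size_iota => E i Hi.
have := congr1 (fun s => nth (x 0) s i) E => /=.
by rewrite !(nth_map 0) ?size_iota // nth_iota.
Qed.

Theorem mainTheorem2 (q : nat) (u : word q) (w v : seq 'I_q) :
  recurrent u -> aperiodic u -> factor_of w u -> factor_of v u ->
  ~ ((exists k, is_max_starting u w (shift k u)) /\
     (exists l, is_min_starting u v (shift l u))).
Proof.
move=> Hrec Hap _ _ [[k [_ [Hwk Hmax]]] [l [_ [Hvl Hmin]]]].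
set N := k + l + size w + size v + 1.
have Hf : factor_of [seq u i | i <- iota 0 N] u.
  by exists 0; rewrite /starts_with size_map size_iota.
have [n [Hn1 Hn]] := Hrec _ Hf 1.
have E := @sw_prefix _ _ _ _ Hn. rewrite /shift in E.
have Hoc : forall m, in_orbit_closure u (shift m u).
  by move=> m M; exists m => i _.
have Sw : starts_with (shift (n + k) u) w.
  apply: sw_agree Hwk => i Hi; rewrite /shift -addnA E //; lia.
have Sv : starts_with (shift (n + l) u) v.
  apply: sw_agree Hvl => i Hi; rewrite /shift -addnA E //; lia.
case: (Hmax _ (Hoc _) Sw) => [Eq1|[m1 [A1 L1]]].
  apply: Hap; exists n, k; split; first lia.
  move=> i Hi; have := Eq1 (i - k); rewrite /shift -addnA subnKC // addnC => ->.
  done.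
case: (Hmin _ (Hoc _) Sv) => [Eq2|[m2 [A2 L2]]].
  apply: Hap; exists n, l; split; first lia.
  move=> i Hi; have := Eq2 (i - l); rewrite /shift -addnA subnKC // addnC => ->.
  done.
rewrite /shift in A1 L1 A2 L2.
have EA : forall j, j < k + m1 -> u (n + j) = u j.
  move=> j Hj; case: (ltnP j N) => Hj2; first exact: E.
  have Hjk : k + (j - k) = j by lia.
  have := A1 (j - k) ltac:(lia); by rewrite -addnA Hjk.
have EB : forall j, j < l + m2 -> u (n + j) = u j.
  move=> j Hj; case: (ltnP j N) => Hj2; first exact: E.
  have Hjl : l + (j - l) = j by lia.
  have := A2 (j - l) ltac:(lia); by rewrite -addnA Hjl.
rewrite -addnA in L1; rewrite -addnA in L2.
case: (ltngtP (k + m1) (l + m2)) => C.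
- by rewrite EB // ltnn in L1.
- by rewrite EA // ltnn in L2.
- rewrite C in L1; have := ltn_trans L1 L2; by rewrite ltnn.
Qed.
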